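(* Let $T>0$ and let $f$ be a Lipschitz function on $\mathcal D=[0,1]^2$ with $f(0,0)=f(1,1)=0$. Let $u_N(t,x)=\mathbb{E}(f(x^t)\mid x^0=x)$ for the process $x^t$ described in the context (extended to all $x\in\mathcal D$ by interpolation in space). There exists a constant $C$ depending on the Lipschitz constant $\|f\|_{\mathrm{lip}}$ of $f$ and on $T$, but not on $N$, such that for all $x,y\in\mathcal D$ and $s,t\in[0,T]$, $$|u_N(t,x)-u_N(t,y)|\le C|x-y|,\qquad |u_N(t,x)-u_N(s,x)|\le C|t-s|^{1/2}.$$
   Context: Two patches have hosting capacities $N_1=N$ and $N_2=dN$, with $d=N_2/N_1\in(0,1]$ fixed; $\kappa>0$ fixed, $\delta t=1/N$, $\kappa\delta t\le 1$. Let $M=\begin{pmatrix} d & -d\\ -1 & 1\end{pmatrix}$ and $A=\mathrm{Id}-\frac{\kappa}{N}M$. For a function $g$ on $\mathcal D$ define $$B_N(g)(x)=\sum_{j_1=0}^{N_1}\sum_{j_2=0}^{N_2}\binom{N_1}{j_1}\binom{N_2}{j_2}x_1^{j_1}(1-x_1)^{N_1-j_1}x_2^{j_2}(1-x_2)^{N_2-j_2}\,g\!\left(\tfrac{j_1}{N_1},\tfrac{j_2}{N_2}\right).$$ $(x^n)_{n\ge0}$ is the Markov chain in $\mathcal D$ with transition kernel $\mathbb{E}(f(x^{n+1})\mid x^n=x)=B_N(f\circ A)(x)$, and $x^t$ is the continuous piecewise linear-in-time process with $x^t=x^n$ at $t=n\delta t$. *)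

(* Defs.v *)
From mathcomp Require Import all_boot all_order all_algebra.
From mathcomp Require Import reals.
Set Implicit Arguments. Unset Strict Implicit. Unset Printing Implicit Defensive.
Import Order.TTheory GRing.Theory Num.Theory.
Local Open Scope ring_scope.

Section Defs.
Variable R : realType.
Notation pt := (R * R)%type.

Definition inD (x : pt) : Prop := 0 <= x.1 <= 1 /\ 0 <= x.2 <= 1.

Definition dist2 (x y : pt) : R :=
  Num.sqrt ((x.1 - y.1) ^+ 2 + (x.2 - y.2) ^+ 2).

Definition lipschitz_on_D (f : pt -> R) (L : R) : Prop :=
  forall x y, inD x -> inD y -> `|f x - f y| <= L * dist2 x y.

Definition bern (n k : nat) (p : R) : R :=
  ('C(n, k))%:R * p ^+ k * (1 - p) ^+ (n - k).

(* B_N(g)(x) with N1, N2 the two capacities *)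
Definition BN (N1 N2 : nat) (g : pt -> R) (x : pt) : R :=
  \sum_(j1 < N1.+1) \sum_(j2 < N2.+1)
     bern N1 j1 x.1 * bern N2 j2 x.2 * g ((j1%:R / N1%:R), (j2%:R / N2%:R)).

(* A = Id - (kappa/N) M, M = [[d, -d], [-1, 1]] *)
Definition Amap (kappa d : R) (N : nat) (x : pt) : pt :=
  (x.1 - kappa / N%:R * (d * x.1 - d * x.2),
   x.2 - kappa / N%:R * (- x.1 + x.2)).

(* one-step transition operator: E(g(x^{n+1}) | x^n = x) = B_N(g o A)(x) *)
Definition Pstep (kappa d : R) (N1 N2 : nat) (g : pt -> R) : pt -> R :=
  BN N1 N2 (fun z => g (Amap kappa d N1 z)).

(* u_N(t,x) = E(f(x^t) | x^0 = x), where x^t = (1-th) x^n + th x^{n+1},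
   n = floor(t N), th = t N - n (dt = 1/N, N = N1). By the Markov property,
   u_N(t,x) = P^n h(x) with h(y) = E(f((1-th) y + th x^{1}) | x^0 = y). *)
Definition uN (kappa d : R) (N1 N2 : nat) (f : pt -> R) (t : R) (x : pt) : R :=
  let n := Num.truncn (t * N1%:R) in
  let th := t * N1%:R - n%:R in
  let h := fun y : pt =>
    BN N1 N2 (fun z => let w := Amap kappa d N1 z in
                       f ((1 - th) * y.1 + th * w.1, (1 - th) * y.2 + th * w.2)) y in
  iter n (Pstep kappa d N1 N2) h x.

End Defs.

(* Main.v *)
Require Import Defs.
From mathcomp Require Import all_boot all_order all_algebra.
From mathcomp Require Import reals ring lra zify.
Import Order.TTheory GRing.Theory Num.Theory.
Local Open Scope ring_scope.
Set Implicit Arguments. Unset Strict Implicit. Unset Printing Implicit Defensive.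

Section S1.
Variable R : realType.

Fixpoint S (N : nat) (h : nat -> R) (p : R) : R :=
  match N with
  | 0%N => h 0%N
  | N'.+1 => p * S N' (fun j => h j.+1) p + (1 - p) * S N' h p
  end.

Lemma S_ext N h1 h2 p : (forall j, (j <= N)%N -> h1 j = h2 j) -> S N h1 p = S N h2 p.
Proof.
elim: N h1 h2 => [|N IH] h1 h2 H /=; first by rewrite H.
rewrite (IH (fun j => h1 j.+1) (fun j => h2 j.+1)); last by move=> j Hj; apply: H.
by rewrite (IH h1 h2) // => j Hj; apply: H; lia.
Qed.

Lemma S_lin N h1 h2 a b c p :
  S N (fun j => a * h1 j + b * h2 j + c) p = a * S N h1 p + b * S N h2 p + c.
Proof.
elim: N h1 h2 => [|N IH] h1 h2 //=.
rewrite (IH (fun j => h1 j.+1) (fun j => h2 j.+1)) IH; ring.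
Qed.

Lemma S_const N c p : S N (fun _ => c) p = c.
Proof. elim: N => [|N IH] //=; rewrite IH; ring. Qed.

Lemma S_le N h1 h2 p : 0 <= p <= 1 -> (forall j, (j <= N)%N -> h1 j <= h2 j) ->
  S N h1 p <= S N h2 p.
Proof.
move=> /andP[p0 p1].
elim: N h1 h2 => [|N IH] h1 h2 H /=; first by apply: H.
have H1 := IH (fun j => h1 j.+1) (fun j => h2 j.+1) (fun j Hj => H j.+1 Hj).
have H2 := IH h1 h2 (fun j Hj => H j (leqW Hj)).
have q0 : 0 <= 1 - p by lra.
by apply: lerD; apply: ler_wpM2l.
Qed.

Lemma S_bound N h p M : 0 <= p <= 1 -> (forall j, (j <= N)%N -> `|h j| <= M) ->
  `|S N h p| <= M.
Proof.
move=> hp H; rewrite ler_norml; apply/andP; split.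
- rewrite -(S_const N (- M) p); apply: S_le => // j Hj.
  by have := H j Hj; rewrite ler_norml => /andP[].
- rewrite -(S_const N M p); apply: S_le => // j Hj.
  by have := H j Hj; rewrite ler_norml => /andP[].
Qed.

Lemma S_lip N h c p q : 0 <= p <= 1 -> 0 <= q <= 1 ->
  (forall j, (j < N)%N -> `|h j.+1 - h j| <= c) ->
  `|S N h p - S N h q| <= N%:R * c * `|p - q|.
Proof.
move=> hp hq.
elim: N h => [|N IH] h H /=; first by rewrite subrr normr0 !mul0r.
have H1 := IH (fun j => h j.+1) (fun j Hj => H j.+1 Hj).
have H2 := IH h (fun j Hj => H j (leqW Hj)).
have H3 : `|S N (fun j => h j.+1) q - S N h q| <= c.
  have := S_lin N (fun j => h j.+1) h 1 (-1) 0 q.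
  rewrite !mul1r addr0 mulN1r => <-.
  apply: S_bound => // j Hj; rewrite mul1r mulN1r addr0; exact: H.
move: H1 H2 H3.
set A1 := S N (fun j => h j.+1) p; set B1 := S N (fun j => h j.+1) q.
set A2 := S N h p; set B2 := S N h q => H1 H2 H3.
have -> : p * A1 + (1 - p) * A2 - (q * B1 + (1 - q) * B2)
   = p * (A1 - B1) + (1 - p) * (A2 - B2) + (p - q) * (B1 - B2) by ring.
move: hp hq => /andP[p0 p1] /andP[q0 q1].
have c0 : 0 <= c by apply: le_trans (normr_ge0 _) H3.
apply: (le_trans (ler_normD _ _)).
apply: (le_trans (lerD (ler_normD _ _) (lexx _))).
have p2 : 0 <= 1 - p by lra.
rewrite !normrM (ger0_norm p0) (ger0_norm p2).
have e1 : p * `|A1 - B1| <= p * (N%:R * c * `|p - q|) by apply: ler_wpM2l.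
have e2 : (1 - p) * `|A2 - B2| <= (1 - p) * (N%:R * c * `|p - q|).
  by apply: ler_wpM2l; lra.
have e3 : `|p - q| * `|B1 - B2| <= `|p - q| * c by apply: ler_wpM2l.
rewrite mulrSr; nra.
Qed.

Lemma S_id N p : S N (fun j => j%:R) p = N%:R * p.
Proof.
elim: N => [|N IH] /=; first by rewrite mul0r.
have -> : S N (fun j => j.+1%:R) p = S N (fun j => 1 * j%:R + 0 * j%:R + 1) p.
  by apply: S_ext => j _; rewrite -natr1; ring.
rewrite S_lin IH -natr1; ring.
Qed.

Lemma S_sq N p : S N (fun j => j%:R ^+ 2) p = N%:R * p * (1 - p) + N%:R ^+ 2 * p ^+ 2.
Proof.
elim: N => [|N IH] /=; first by rewrite expr0n /= !mul0r add0r.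
have -> : S N (fun j => j.+1%:R ^+ 2) p = S N (fun j => 1 * j%:R ^+ 2 + 2 * j%:R + 1) p.
  by apply: S_ext => j _; rewrite -natr1; ring.
rewrite S_lin IH S_id -natr1; ring.
Qed.

Lemma S_quad N (h : R -> R) al be ga p : (0 < N)%N ->
  (forall y, h y = al * y ^+ 2 + be * y + ga) ->
  S N (fun j => h (j%:R / N%:R)) p = h p + al * (p * (1 - p)) / N%:R.
Proof.
move=> N0 Hh.
have Nn : N%:R != 0 :> R by rewrite pnatr_eq0 -lt0n.
have -> : S N (fun j => h (j%:R / N%:R)) p =
   S N (fun j => (al / N%:R ^+ 2) * j%:R ^+ 2 + (be / N%:R) * j%:R + ga) p.
  apply: S_ext => j _; rewrite Hh; field; exact: Nn.
rewrite S_lin S_sq S_id Hh; field; exact: Nn.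
Qed.

Lemma S_bern N h p : S N h p = \sum_(j < N.+1) bern N j p * h j.
Proof.
elim: N h => [|N IH] h /=.
  by rewrite big_ord_recl big_ord0 /bern /= bin0 !expr0 !mulr1 addr0 mul1r.
rewrite big_ord_recl IH IH.
have E : forall j : 'I_N.+1, bern N.+1 (bump 0 j) p * h (bump 0 j) =
   p * (bern N j p * h j.+1) + ('C(N, j.+1))%:R * p ^+ j.+1 * (1 - p) ^+ (N - j) * h j.+1.
  move=> j; rewrite /bern /bump /= add1n binS subSS natrD exprS; ring.
rewrite (eq_bigr _ (fun j _ => E j)) big_split /= -mulr_sumr.
suff -> : (1 - p) * (\sum_(j < N.+1) bern N j p * h j) =
   bern N.+1 0 p * h 0%N + \sum_(i < N.+1) ('C(N, i.+1))%:R * p ^+ i.+1 * (1 - p) ^+ (N - i) * h i.+1.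
  ring.
rewrite [in RHS]big_ord_recr /= bin_small // !mul0r addr0.
rewrite big_ord_recl mulrDr; congr (_ + _).
  by rewrite /bern !bin0 !subn0 /= !expr0 !mul1r exprS; ring.
rewrite mulr_sumr; apply: eq_bigr => j _.
have Hb : (lift ord0 j : nat) = j.+1 by []. rewrite /bern !Hb.
have -> : (N - j = (N - j.+1).+1)%N by rewrite subnSK.
rewrite [(1 - p) ^+ (_.+1)]exprS; ring.
Qed.

Lemma S_sub N h1 h2 p : S N (fun j => h1 j - h2 j) p = S N h1 p - S N h2 p.
Proof.
have := S_lin N h1 h2 1 (-1) 0 p.
have -> : 1 * S N h1 p + -1 * S N h2 p + 0 = S N h1 p - S N h2 p by ring.
move=> <-; apply: S_ext => j _; ring.
Qed.

Lemma BN_S N1 N2 (g : R * R -> R) x :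
  BN N1 N2 g x = S N1 (fun j1 => S N2 (fun j2 => g (j1%:R / N1%:R, j2%:R / N2%:R)) x.2) x.1.
Proof.
rewrite S_bern /BN; apply: eq_bigr => j1 _.
rewrite S_bern mulr_sumr; apply: eq_bigr => j2 _; ring.
Qed.

End S1.

Section S2.
Variable R : realType.
Variables (kappa d : R) (N1 N2 : nat).
Hypothesis k0 : 0 < kappa.
Hypothesis d0 : 0 < d.
Hypothesis d1 : d <= 1.
Hypothesis N10 : (0 < N1)%N.
Hypothesis N2d : N2%:R = d * N1%:R.
Hypothesis a1 : kappa / N1%:R <= 1.

Notation pt := (R * R)%type.
Local Notation a := (kappa / N1%:R).
Local Notation A := (Amap kappa d N1).
Local Notation P := (Pstep kappa d N1 N2).
Local Notation Pk k := (iter k P).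

Definition nu (x y : pt) : R := `|x.1 - y.1| + d * `|x.2 - y.2|.
Definition Q (c w : pt) : R := (w.1 - c.1) ^+ 2 + d * (w.2 - c.2) ^+ 2.
Definition lipnu (g : pt -> R) (K : R) :=
  forall x y, inD x -> inD y -> `|g x - g y| <= K * nu x y.

Lemma N1pos : 0 < N1%:R :> R.
Proof. by rewrite ltr0n. Qed.

Lemma N2pos : (0 < N2)%N.
Proof.
have : 0 < N2%:R :> R by rewrite N2d; apply: mulr_gt0 => //; exact: N1pos.
by rewrite ltr0n.
Qed.

Lemma a0 : 0 <= a.
Proof. apply: divr_ge0; [exact: ltW | exact: ltW N1pos]. Qed.

Lemma A_inD w : inD w -> inD (A w).
Proof.
rewrite /inD /Amap /= => [[/andP[w10 w11] /andP[w20 w21]]].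
move: a0 a1; move: (kappa / N1%:R) => aa ha ha1.
have ad0 : 0 <= aa * d by apply: mulr_ge0 => //; exact: ltW.
have ad1 : aa * d <= 1 by have := ler_wpM2l ha d1; rewrite mulr1; lra.
have h1 : 0 <= (1 - aa * d) * w.1 by apply: mulr_ge0; lra.
have h2 : 0 <= aa * d * w.2 by apply: mulr_ge0; lra.
have h3 : 0 <= (1 - aa * d) * (1 - w.1) by apply: mulr_ge0; lra.
have h4 : 0 <= aa * d * (1 - w.2) by apply: mulr_ge0; lra.
have g1 : 0 <= (1 - aa) * w.2 by apply: mulr_ge0; lra.
have g2 : 0 <= aa * w.1 by apply: mulr_ge0; lra.
have g3 : 0 <= (1 - aa) * (1 - w.2) by apply: mulr_ge0; lra.
have g4 : 0 <= aa * (1 - w.1) by apply: mulr_ge0; lra.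
split; apply/andP; split; nra.
Qed.

Lemma grid_inD (j1 j2 : nat) : (j1 <= N1)%N -> (j2 <= N2)%N ->
  inD ((j1%:R / N1%:R : R), (j2%:R / N2%:R : R)).
Proof.
move=> h1 h2; have n1 := N1pos.
have n2 : 0 < N2%:R :> R by rewrite ltr0n N2pos.
rewrite /inD /=; split; apply/andP; split.
- by apply: divr_ge0; rewrite ?ler0n ?ltW.
- by rewrite ler_pdivrMr // mul1r ler_nat.
- by apply: divr_ge0; rewrite ?ler0n ?ltW.
- by rewrite ler_pdivrMr // mul1r ler_nat.
Qed.

Lemma P_S g x : P g x =
  S N1 (fun j1 => S N2 (fun j2 => g (A (j1%:R / N1%:R, j2%:R / N2%:R))) x.2) x.1.
Proof. by rewrite /Pstep BN_S. Qed.

Lemma P_le g1 g2 x : inD x -> (forall w, inD w -> g1 w <= g2 w) -> P g1 x <= P g2 x.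
Proof.
move=> [hx1 hx2] H; rewrite !P_S; apply: S_le => // j1 Hj1.
apply: S_le => // j2 Hj2; apply: H; apply: A_inD; exact: grid_inD.
Qed.

Lemma P_ext g1 g2 x : inD x -> (forall w, inD w -> g1 w = g2 w) -> P g1 x = P g2 x.
Proof.
move=> hx H; apply/eqP; rewrite eq_le; apply/andP; split; apply: P_le => // w hw;
  by rewrite H.
Qed.

Lemma P_lin g1 g2 al be c x :
  P (fun w => al * g1 w + be * g2 w + c) x = al * P g1 x + be * P g2 x + c.
Proof. rewrite !P_S -S_lin; apply: S_ext => j1 _; by rewrite S_lin. Qed.

Lemma Pk_le k g1 g2 x : inD x -> (forall w, inD w -> g1 w <= g2 w) ->
  Pk k g1 x <= Pk k g2 x.
Proof.
elim: k x => [|k IH] x hx H /=; first exact: H.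
by apply: P_le => // w hw; apply: IH.
Qed.

Lemma Pk_ext k g1 g2 x : inD x -> (forall w, inD w -> g1 w = g2 w) ->
  Pk k g1 x = Pk k g2 x.
Proof.
move=> hx H; apply/eqP; rewrite eq_le; apply/andP; split; apply: Pk_le => // w hw;
  by rewrite H.
Qed.

Lemma Pk_lin k g1 g2 al be c x : inD x ->
  Pk k (fun w => al * g1 w + be * g2 w + c) x = al * Pk k g1 x + be * Pk k g2 x + c.
Proof.
elim: k x => [|k IH] x hx //=.
rewrite -P_lin; apply: P_ext => // w hw; exact: IH.
Qed.

Lemma Pk_const k c x : inD x -> Pk k (fun _ => c) x = c.
Proof.
elim: k x => [|k IH] x hx //=.
have -> : P (Pk k (fun _ => c)) x = P (fun _ => c) x.
  by apply: P_ext => // w hw; apply: IH.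
rewrite P_S (S_ext (h2 := fun _ => c)) ?S_const // => j _; exact: S_const.
Qed.

Lemma Pk_sub k g1 g2 x : inD x ->
  Pk k (fun w => g1 w - g2 w) x = Pk k g1 x - Pk k g2 x.
Proof.
move=> hx; have := Pk_lin k g1 g2 1 (-1) 0 hx.
have -> : 1 * Pk k g1 x + -1 * Pk k g2 x + 0 = Pk k g1 x - Pk k g2 x by ring.
move=> <-; apply: Pk_ext => // w _; ring.
Qed.

Lemma Pk_bound k g M x : inD x -> (forall w, inD w -> `|g w| <= M) -> `|Pk k g x| <= M.
Proof.
move=> hx H; rewrite ler_norml; apply/andP; split.
- rewrite -(Pk_const k (- M) hx); apply: Pk_le => // w hw.
  by have := H w hw; rewrite ler_norml => /andP[].
- rewrite -(Pk_const k M hx); apply: Pk_le => // w hw.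
  by have := H w hw; rewrite ler_norml => /andP[].
Qed.

Lemma Pk_absle k g x : inD x -> `|Pk k g x| <= Pk k (fun w => `|g w|) x.
Proof.
move=> hx; rewrite ler_norml; apply/andP; split.
- have := Pk_lin k (fun w => `|g w|) (fun w => 0) (-1) 0 0 hx.
  have -> : -1 * Pk k (fun w => `|g w|) x + 0 * Pk k (fun=> 0) x + 0 =
            - Pk k (fun w => `|g w|) x by ring.
  move=> <-; apply: Pk_le => // w hw.
  have := ler_norm (- g w); rewrite normrN; lra.
- by apply: Pk_le => // w hw; exact: ler_norm.
Qed.

Lemma norm_comb (u v p q : R) : 0 <= u -> 0 <= v ->
  `|u * p + v * q| <= u * `|p| + v * `|q|.
Proof.
move=> hu hv; apply: (le_trans (ler_normD _ _)).
by rewrite !normrM (ger0_norm hu) (ger0_norm hv).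
Qed.

Lemma A_nu x y : nu (A x) (A y) <= nu x y.
Proof.
rewrite /nu.
have e1 : (A x).1 - (A y).1 = (1 - a * d) * (x.1 - y.1) + a * d * (x.2 - y.2).
  by rewrite /Amap /=; ring.
have e2 : (A x).2 - (A y).2 = a * (x.1 - y.1) + (1 - a) * (x.2 - y.2).
  by rewrite /Amap /=; ring.
rewrite e1 e2.
move: a0 a1 e1 e2; move: (kappa / N1%:R) => aa ha ha1 _ _.
have ad0 : 0 <= aa * d by apply: mulr_ge0 => //; exact: ltW.
have ad1 : aa * d <= 1 by have := ler_wpM2l ha d1; rewrite mulr1; lra.
have H1 := norm_comb (x.1 - y.1) (x.2 - y.2) (_ : 0 <= 1 - aa * d) ad0.
have H2 := norm_comb (x.1 - y.1) (x.2 - y.2) ha (_ : 0 <= 1 - aa).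
have n1 := normr_ge0 (x.1 - y.1); have n2 := normr_ge0 (x.2 - y.2).
have H3 : d * `|aa * (x.1 - y.1) + (1 - aa) * (x.2 - y.2)| <=
          d * (aa * `|x.1 - y.1| + (1 - aa) * `|x.2 - y.2|).
  by apply: ler_wpM2l; [exact: ltW | apply: H2; lra].
have := H1 ltac:(lra).
set u1 := `|x.1 - y.1|; set u2 := `|x.2 - y.2|.
move: H3; set L1 := `|_ + _|; set L2 := `|_ + _|.
move=> H3 H4.
have -> : u1 + d * u2 = ((1 - aa * d) * u1 + aa * d * u2) + d * (aa * u1 + (1 - aa) * u2) by ring.
exact: lerD.
Qed.

Lemma nu_grid1 (j1 j2 : nat) :
  nu ((j1.+1)%:R / N1%:R, j2%:R / N2%:R) (j1%:R / N1%:R, j2%:R / N2%:R) = 1 / N1%:R.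
Proof.
rewrite /nu /= subrr normr0 mulr0 addr0 -mulrBl -natrB // subSnn.
by rewrite ger0_norm // divr_ge0 // ?ler0n // ltW // N1pos.
Qed.

Lemma nu_grid2 (j1 j2 : nat) :
  nu (j1%:R / N1%:R, (j2.+1)%:R / N2%:R) (j1%:R / N1%:R, j2%:R / N2%:R) = d / N2%:R.
Proof.
rewrite /nu /= subrr normr0 add0r -mulrBl -natrB // subSnn.
rewrite ger0_norm ?mulrA ?mulr1 // divr_ge0 // ?ler0n //.
Qed.

Lemma P_lip g K : 0 <= K -> lipnu g K -> lipnu (P g) K.
Proof.
move=> K0 Hg x y hx hy; rewrite !P_S.
pose G := fun j1 j2 : nat => g (A (j1%:R / N1%:R, j2%:R / N2%:R)).
pose F1 := fun j1 => S N2 (G j1) x.2.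
pose F2 := fun j1 => S N2 (G j1) y.2.
change (`|S N1 F1 x.1 - S N1 F2 y.1| <= K * nu x y).
have [[hx1 hx2] [hy1 hy2]] := (hx, hy).
have n1 := N1pos.
have n2 : 0 < N2%:R :> R by rewrite ltr0n N2pos.
have T1 : `|S N1 F1 x.1 - S N1 F1 y.1| <= K * `|x.1 - y.1|.
  rewrite (_ : K * _ = N1%:R * (K / N1%:R) * `|x.1 - y.1|); last first.
    by field; rewrite gt_eqF.
  apply: S_lip => // j hj.
  rewrite /F1 -S_sub; apply: S_bound => // j2 hj2.
  apply: (le_trans (Hg _ _ _ _)).
  - by apply: A_inD; apply: grid_inD.
  - by apply: A_inD; apply: grid_inD => //; exact: ltnW.
  have -> : K / N1%:R = K * (1 / N1%:R) by rewrite mul1r.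
  rewrite -(nu_grid1 j j2) ler_wpM2l //; exact: A_nu.
have T2 : `|S N1 F1 y.1 - S N1 F2 y.1| <= K * (d * `|x.2 - y.2|).
  rewrite -S_sub; apply: S_bound => // j1 hj1.
  rewrite (_ : K * _ = N2%:R * (K * d / N2%:R) * `|x.2 - y.2|); last first.
    by field; rewrite gt_eqF.
  apply: S_lip => // j hj.
  apply: (le_trans (Hg _ _ _ _)).
  - by apply: A_inD; apply: grid_inD.
  - by apply: A_inD; apply: grid_inD => //; exact: ltnW.
  have -> : K * d / N2%:R = K * (d / N2%:R) by rewrite mulrA.
  rewrite -(nu_grid2 j1 j) ler_wpM2l //; exact: A_nu.
have -> : S N1 F1 x.1 - S N1 F2 y.1 =
   (S N1 F1 x.1 - S N1 F1 y.1) + (S N1 F1 y.1 - S N1 F2 y.1) by ring.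
apply: (le_trans (ler_normD _ _)); rewrite /nu mulrDr; exact: lerD.
Qed.

Lemma Pk_lip k g K : 0 <= K -> lipnu g K -> lipnu (Pk k g) K.
Proof. move=> K0; elim: k => [|k IH] //= Hg; apply: P_lip => //; exact: IH. Qed.

Lemma coef_bound (aa w1 w2 : R) : 0 <= aa <= 1 -> 0 <= w1 <= 1 -> 0 <= w2 <= 1 ->
  ((1 - aa * d) ^+ 2 + d * aa ^+ 2) * (w1 * (1 - w1)) / N1%:R +
  ((aa * d) ^+ 2 + d * (1 - aa) ^+ 2) * (w2 * (1 - w2)) / N2%:R <= 1 / N1%:R.
Proof.
move=> /andP[ha ha1] /andP[hw1 hw1'] /andP[hw2 hw2'].
have n1 := N1pos.
rewrite N2d.
have X1 : ((1 - aa * d) ^+ 2 + d * aa ^+ 2) * (w1 * (1 - w1)) <= 1 / 2.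
  have ad0 : 0 <= aa * d by apply: mulr_ge0 => //; exact: ltW.
  have ad1 : aa * d <= 1 by have := ler_wpM2l ha d1; rewrite mulr1; lra.
  have e1 : (1 - aa * d) ^+ 2 <= 1.
    rewrite expr2 -[1]mulr1; apply: ler_pM; lra.
  have q1 : aa ^+ 2 <= 1 by rewrite expr2 -[1]mulr1; apply: ler_pM; lra.
  have e2 : d * aa ^+ 2 <= 1 by rewrite -[1]mulr1; apply: ler_pM => //;
    [exact: ltW | exact: sqr_ge0].
  have e3 : w1 * (1 - w1) <= 1 / 4 by have := sqr_ge0 (w1 - 1 / 2); nra.
  have e4 : 0 <= w1 * (1 - w1) by apply: mulr_ge0; lra.
  have e5 : ((1 - aa * d) ^+ 2 + d * aa ^+ 2) * (w1 * (1 - w1)) <= 2 * (1 / 4).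
    apply: ler_pM => //; last lra.
    by apply: addr_ge0; [exact: sqr_ge0 | apply: mulr_ge0; [exact: ltW | exact: sqr_ge0]].
  lra.
have X2 : ((aa * d) ^+ 2 + d * (1 - aa) ^+ 2) * (w2 * (1 - w2)) <= d / 2.
  have q1 : aa ^+ 2 <= aa by rewrite expr2; have := ler_wpM2l ha ha1; rewrite mulr1.
  have q2 : (1 - aa) ^+ 2 <= 1 - aa.
    by rewrite expr2; have := ler_wpM2l (_ : 0 <= 1 - aa) (_ : 1 - aa <= 1); rewrite mulr1; apply; lra.
  have q3 : aa ^+ 2 * d <= aa ^+ 2.
    by have := ler_wpM2l (sqr_ge0 aa) d1; rewrite mulr1.
  have e1 : (aa * d) ^+ 2 + d * (1 - aa) ^+ 2 <= d.
    have -> : (aa * d) ^+ 2 + d * (1 - aa) ^+ 2 = d * (aa ^+ 2 * d + (1 - aa) ^+ 2) by ring.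
    rewrite -[X in _ <= X]mulr1; apply: ler_wpM2l; [exact: ltW | lra].
  have e3 : w2 * (1 - w2) <= 1 / 4 by have := sqr_ge0 (w2 - 1 / 2); nra.
  have e4 : 0 <= w2 * (1 - w2) by apply: mulr_ge0; lra.
  have e5 : 0 <= (aa * d) ^+ 2 + d * (1 - aa) ^+ 2.
    by apply: addr_ge0; [exact: sqr_ge0 | apply: mulr_ge0; [exact: ltW | exact: sqr_ge0]].
  have e6 : ((aa * d) ^+ 2 + d * (1 - aa) ^+ 2) * (w2 * (1 - w2)) <= d * (1 / 4).
    by apply: ler_pM.
  lra.
set U := _ * (w1 * _) in X1 *; set V := _ * (w2 * _) in X2 *.
have -> : U / N1%:R + V / (d * N1%:R) = (U + V / d) / N1%:R.
  by field; rewrite !gt_eqF.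
rewrite ler_pM2r ?invr_gt0 //.
have : V / d <= 1 / 2.
  by rewrite ler_pdivrMr //; lra.
lra.
Qed.

Lemma PQ c w : inD w -> P (Q c) w <= Q c (A w) + 1 / N1%:R.
Proof.
move=> hw; have [hw1 hw2] := hw.
have n1 := N1pos.
pose al2 := (a * d) ^+ 2 + d * (1 - a) ^+ 2.
pose al1 := (1 - a * d) ^+ 2 + d * a ^+ 2.
have inner : forall y1, S N2 (fun j2 => Q c (A (y1, j2%:R / N2%:R))) w.2 =
    Q c (A (y1, w.2)) + al2 * (w.2 * (1 - w.2)) / N2%:R.
  move=> y1.
  apply: (@S_quad _ N2 (fun y => Q c (A (y1, y))) al2
     (2 * a * d * ((1 - a * d) * y1 - c.1) + 2 * d * (1 - a) * (a * y1 - c.2))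
     (((1 - a * d) * y1 - c.1) ^+ 2 + d * (a * y1 - c.2) ^+ 2) w.2 N2pos).
  by move=> y; rewrite /Q /Amap /al2 /=; ring.
rewrite P_S (S_ext (h2 := fun j1 => Q c (A (j1%:R / N1%:R, w.2)) +
     al2 * (w.2 * (1 - w.2)) / N2%:R)); last by move=> j _; apply: inner.
rewrite (@S_quad _ N1 (fun y => Q c (A (y, w.2)) + al2 * (w.2 * (1 - w.2)) / N2%:R)
   al1
   (2 * (1 - a * d) * (a * d * w.2 - c.1) + 2 * d * a * ((1 - a) * w.2 - c.2))
   ((a * d * w.2 - c.1) ^+ 2 + d * ((1 - a) * w.2 - c.2) ^+ 2 +
          al2 * (w.2 * (1 - w.2)) / N2%:R) w.1 N10); last first.
  by move=> y; rewrite /Q /Amap /al1 /=; ring.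
rewrite -surjective_pairing.
have := coef_bound (aa := a) (w1 := w.1) (w2 := w.2) _ hw1 hw2.
rewrite -/al1 -/al2 a0 a1 => /(_ isT); lra.
Qed.

Lemma Q_A c w : Q (A c) (A w) <= Q c w.
Proof.
rewrite /Q /Amap /=.
move: a0 a1; move: (kappa / N1%:R) => aa ha ha1.
set s := (w.1 - c.1) - (w.2 - c.2).
have E : (w.1 - c.1) ^+ 2 + d * (w.2 - c.2) ^+ 2 -
  ((w.1 - aa * (d * w.1 - d * w.2) - (c.1 - aa * (d * c.1 - d * c.2))) ^+ 2 +
   d * (w.2 - aa * (- w.1 + w.2) - (c.2 - aa * (- c.1 + c.2))) ^+ 2)
  = aa * d * (2 - aa * (1 + d)) * s ^+ 2 by rewrite /s; ring.
have : 0 <= aa * d * (2 - aa * (1 + d)) * s ^+ 2.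
  apply: mulr_ge0; last exact: sqr_ge0.
  apply: mulr_ge0; first by apply: mulr_ge0 => //; exact: ltW.
  have d1x := d1.
  have : aa * (1 + d) <= aa * 2 by apply: ler_wpM2l => //; lra.
  lra.
lra.
Qed.

Lemma Pk_addc k g c x : inD x -> Pk k (fun w => g w + c) x = Pk k g x + c.
Proof.
move=> hx; have := Pk_lin k g g 1 0 c hx.
rewrite mul1r mul0r addr0 => <-; apply: Pk_ext => // w _; ring.
Qed.

Lemma iterA_inD k x : inD x -> inD (iter k A x).
Proof. by move=> hx; elim: k => [|k IH] //=; apply: A_inD. Qed.

Lemma Pk_Q k c z : inD z -> Pk k (Q (iter k A c)) z <= Q c z + k%:R / N1%:R.
Proof.
elim: k c z => [|k IH] c z hz; first by rewrite /= mul0r addr0.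
rewrite iterSr.
apply: (le_trans (Pk_le (g2 := fun w => Q (iter k A c) w + 1 / N1%:R) _ hz _)).
  move=> w hw; apply: (le_trans (PQ _ hw)); rewrite lerD2r /=; exact: Q_A.
rewrite Pk_addc // -natr1 mulrDl addrA lerD2r; exact: IH.
Qed.

Lemma nu_tri x y z : nu x z <= nu x y + nu y z.
Proof.
rewrite /nu.
have h1 : `|x.1 - z.1| <= `|x.1 - y.1| + `|y.1 - z.1|.
  by rewrite (_ : x.1 - z.1 = (x.1 - y.1) + (y.1 - z.1)) ?ler_normD //; ring.
have h2 : `|x.2 - z.2| <= `|x.2 - y.2| + `|y.2 - z.2|.
  by rewrite (_ : x.2 - z.2 = (x.2 - y.2) + (y.2 - z.2)) ?ler_normD //; ring.
have := ler_wpM2l (ltW d0) h2; lra.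
Qed.

Lemma nu_sq w c : nu w c ^+ 2 <= 2 * Q c w.
Proof.
rewrite /nu /Q.
have -> : (w.1 - c.1) ^+ 2 = `|w.1 - c.1| ^+ 2 by rewrite real_normK // num_real.
have -> : (w.2 - c.2) ^+ 2 = `|w.2 - c.2| ^+ 2 by rewrite real_normK // num_real.
set u := `|_|; set v := `|_|.
have : 0 <= d * (u - v) ^+ 2 by apply: mulr_ge0; [exact: ltW | exact: sqr_ge0].
have : 0 <= (1 - d) * (u ^+ 2 + d * v ^+ 2).
  apply: mulr_ge0; first by have := d1; lra.
  by apply: addr_ge0; [exact: sqr_ge0 | apply: mulr_ge0; [exact: ltW | exact: sqr_ge0]].
nra.
Qed.

Lemma nu_A_self w : inD w -> nu (A w) w <= 2 * a.
Proof.
move=> [/andP[w10 w11] /andP[w20 w21]].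
rewrite /nu /Amap /=.
move: a0 a1; move: (kappa / N1%:R) => aa ha ha1.
have -> : w.1 - aa * (d * w.1 - d * w.2) - w.1 = (- (aa * d)) * (w.1 - w.2) by ring.
have -> : w.2 - aa * (- w.1 + w.2) - w.2 = aa * (w.1 - w.2) by ring.
rewrite !normrM normrN normrM (ger0_norm ha) (ger0_norm (ltW d0)).
have : `|w.1 - w.2| <= 1 by rewrite ler_norml; lra.
have := normr_ge0 (w.1 - w.2).
set u := `|_|; move=> u0 u1.
have h3 := ler_wpM2l ha (ler_pM (ltW d0) u0 d1 u1); rewrite mulr1 in h3.
have -> : aa * d * u + d * (aa * u) = 2 * (aa * (d * u)) by ring.
lra.
Qed.

Lemma nu_iter k x : inD x -> nu (iter k A x) x <= 2 * a * k%:R.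
Proof.
move=> hx; elim: k => [|k IH]; first by rewrite /= /nu !subrr normr0 mulr0 addr0 mulr0.
rewrite iterS.
apply: (le_trans (nu_tri _ (iter k A x) _)).
have := nu_A_self (iterA_inD k hx).
have -> : 2 * a * k.+1%:R = 2 * a * k%:R + 2 * a by rewrite -[k.+1]addn1 natrD mulrDr mulr1.
lra.
Qed.

Lemma Pk_nu k x : inD x ->
  Pk k (fun w => nu w x) x <= Num.sqrt (2 * k%:R / N1%:R) + 2 * a * k%:R.
Proof.
move=> hx.
case: k => [|k].
  rewrite /= /nu !subrr normr0 mulr0 addr0; apply: addr_ge0; [exact: sqrtr_ge0 | by rewrite mulr0n mulr0].
set c := iter k.+1 A x.
set e := Num.sqrt (2 * k.+1%:R / N1%:R).
have n1 := N1pos.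
have e2 : e ^+ 2 = 2 * k.+1%:R / N1%:R.
  by rewrite sqr_sqrtr // divr_ge0 // ?ler0n // mulr_ge0 // ler0n.
have e0 : 0 < e by rewrite sqrtr_gt0 divr_gt0 // mulr_gt0 // ltr0n.
apply: (le_trans (Pk_le (g2 := fun w => nu w c + nu c x) _ hx _)).
  by move=> w _; exact: nu_tri.
rewrite Pk_addc //; apply: lerD; last exact: nu_iter.
apply: (le_trans (Pk_le (g2 := fun w => (1 / e) * Q c w + 0 * Q c w + e / 2) _ hx _)).
  move=> w _.
  have h1 := nu_sq w c.
  have h2 : 0 <= (nu w c - e) ^+ 2 by exact: sqr_ge0.
  rewrite mul0r addr0 -(ler_pM2r e0).
  have -> : (1 / e * Q c w + e / 2) * e = Q c w + e ^+ 2 / 2.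
    by field; rewrite gt_eqF.
  nra.
rewrite Pk_lin // mul0r addr0.
have Qxx : Q x x = 0 by rewrite /Q !subrr expr0n /= mulr0 addr0.
have := Pk_Q k.+1 x hx; rewrite Qxx add0r -/c.
move=> H.
have H' : 1 / e * Pk k.+1 (Q c) x <= 1 / e * (k.+1%:R / N1%:R).
  by apply: ler_wpM2l => //; rewrite divr_ge0 // ltW.
apply: (le_trans (lerD H' (lexx _))).
have -> : 1 / e * (k.+1%:R / N1%:R) = e ^+ 2 / (2 * e).
  by rewrite e2; field; rewrite !gt_eqF.
rewrite le_eqVlt; apply/orP; left; apply/eqP; field; by rewrite gt_eqF.
Qed.

Lemma Pk_near k g K x : 0 <= K -> lipnu g K -> inD x ->
  `|Pk k g x - g x| <= K * (Num.sqrt (2 * k%:R / N1%:R) + 2 * a * k%:R).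
Proof.
move=> K0 Hg hx.
rewrite -Pk_addc //.
apply: (le_trans (Pk_absle _ _ hx)).
apply: (le_trans (Pk_le (g2 := fun w => K * nu w x + 0 * nu w x + 0) _ hx _)).
  move=> w hw; rewrite mul0r !addr0; exact: Hg.
rewrite Pk_lin // mul0r !addr0; apply: ler_wpM2l => //; exact: Pk_nu.
Qed.

Definition Fth (f : pt -> R) (th : R) (y : pt) : pt -> R :=
  fun w => f ((1 - th) * y.1 + th * w.1, (1 - th) * y.2 + th * w.2).
Definition Hth (f : pt -> R) (th : R) : pt -> R := fun y => P (Fth f th y) y.

Lemma uN_eq f t x : uN kappa d N1 N2 f t x =
  Pk (Num.truncn (t * N1%:R)) (Hth f (t * N1%:R - (Num.truncn (t * N1%:R))%:R)) x.
Proof. by []. Qed.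

Lemma conv_inD (th : R) (y w : pt) : 0 <= th <= 1 -> inD y -> inD w ->
  inD ((1 - th) * y.1 + th * w.1, (1 - th) * y.2 + th * w.2).
Proof.
move=> /andP[t0 t1] [/andP[y10 y11] /andP[y20 y21]] [/andP[w10 w11] /andP[w20 w21]].
rewrite /inD /=.
have g1 : 0 <= (1 - th) * y.1 by apply: mulr_ge0; lra.
have g2 : 0 <= th * w.1 by apply: mulr_ge0; lra.
have g3 : 0 <= (1 - th) * y.2 by apply: mulr_ge0; lra.
have g4 : 0 <= th * w.2 by apply: mulr_ge0; lra.
have g5 : 0 <= (1 - th) * (1 - y.1) by apply: mulr_ge0; lra.
have g6 : 0 <= th * (1 - w.1) by apply: mulr_ge0; lra.
have g7 : 0 <= (1 - th) * (1 - y.2) by apply: mulr_ge0; lra.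
have g8 : 0 <= th * (1 - w.2) by apply: mulr_ge0; lra.
split; apply/andP; split; nra.
Qed.

Lemma nu_conv (th th' : R) (y w : pt) :
  nu ((1 - th) * y.1 + th * w.1, (1 - th) * y.2 + th * w.2)
     ((1 - th') * y.1 + th' * w.1, (1 - th') * y.2 + th' * w.2) = `|th - th'| * nu w y.
Proof.
rewrite /nu /=.
have -> : (1 - th) * y.1 + th * w.1 - ((1 - th') * y.1 + th' * w.1) = (th - th') * (w.1 - y.1) by ring.
have -> : (1 - th) * y.2 + th * w.2 - ((1 - th') * y.2 + th' * w.2) = (th - th') * (w.2 - y.2) by ring.
rewrite !normrM; ring.
Qed.

Lemma nu_conv2 (th : R) (y y' w w' : pt) : 0 <= th <= 1 ->
  nu ((1 - th) * y.1 + th * w.1, (1 - th) * y.2 + th * w.2)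
     ((1 - th) * y'.1 + th * w'.1, (1 - th) * y'.2 + th * w'.2) <=
  (1 - th) * nu y y' + th * nu w w'.
Proof.
move=> /andP[t0 t1]; rewrite /nu /=.
have -> : (1 - th) * y.1 + th * w.1 - ((1 - th) * y'.1 + th * w'.1) = (1 - th) * (y.1 - y'.1) + th * (w.1 - w'.1) by ring.
have -> : (1 - th) * y.2 + th * w.2 - ((1 - th) * y'.2 + th * w'.2) = (1 - th) * (y.2 - y'.2) + th * (w.2 - w'.2) by ring.
have h1 := norm_comb (y.1 - y'.1) (w.1 - w'.1) (_ : 0 <= 1 - th) t0.
have h2 := norm_comb (y.2 - y'.2) (w.2 - w'.2) (_ : 0 <= 1 - th) t0.
have h3 : 0 <= 1 - th by lra.
have h4 := ler_wpM2l (ltW d0) (h2 h3).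
have -> : (1 - th) * (`|y.1 - y'.1| + d * `|y.2 - y'.2|) + th * (`|w.1 - w'.1| + d * `|w.2 - w'.2|)
  = ((1 - th) * `|y.1 - y'.1| + th * `|w.1 - w'.1|) + d * ((1 - th) * `|y.2 - y'.2| + th * `|w.2 - w'.2|) by ring.
apply: lerD => //; exact: h1.
Qed.

Lemma H_lip f K th : 0 <= K -> 0 <= th <= 1 -> lipnu f K -> lipnu (Hth f th) K.
Proof.
move=> K0 hth Hf y y' hy hy'.
have [t0 t1] := andP hth.
rewrite /Hth.
have L1 : lipnu (Fth f th y) (K * th).
  move=> w w' hw hw'; rewrite /Fth.
  apply: (le_trans (Hf _ _ (conv_inD hth hy hw) (conv_inD hth hy hw'))).
  have := nu_conv2 y y w w' hth.
  rewrite {2}/nu !subrr normr0 mulr0 addr0 mulr0 add0r => H.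
  rewrite -mulrA; apply: ler_wpM2l => //.
have T1 := P_lip (mulr_ge0 K0 t0) L1 hy hy'.
have T2 : `|P (Fth f th y) y' - P (Fth f th y') y'| <= K * (1 - th) * nu y y'.
  rewrite -(Pk_sub 1%N) //; apply: Pk_bound => // w hw.
  rewrite /Fth; apply: (le_trans (Hf _ _ (conv_inD hth hy hw) (conv_inD hth hy' hw))).
  have := nu_conv2 y y' w w hth.
  rewrite [nu w w]/nu !subrr normr0 mulr0 addr0 mulr0 addr0 => H.
  rewrite -mulrA; apply: ler_wpM2l => //.
have -> : P (Fth f th y) y - P (Fth f th y') y' =
  (P (Fth f th y) y - P (Fth f th y) y') + (P (Fth f th y) y' - P (Fth f th y') y') by ring.
apply: (le_trans (ler_normD _ _)).
have -> : K * nu y y' = K * th * nu y y' + K * (1 - th) * nu y y' by ring.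
exact: lerD.
Qed.

Definition D1 := Num.sqrt (2 * 1%:R / N1%:R) + 2 * a * 1%:R.

Lemma H_diff f K th th' y : 0 <= K -> 0 <= th <= 1 -> 0 <= th' <= 1 -> lipnu f K -> inD y ->
  `|Hth f th y - Hth f th' y| <= K * `|th - th'| * D1.
Proof.
move=> K0 h1 h2 Hf hy.
rewrite /Hth -(Pk_sub 1%N) //.
apply: (le_trans (Pk_absle _ _ hy)).
apply: (le_trans (Pk_le (g2 := fun w => (K * `|th - th'|) * nu w y + 0 * nu w y + 0) _ hy _)).
  move=> w hw; rewrite mul0r !addr0 /Fth.
  apply: (le_trans (Hf _ _ (conv_inD h1 hy hw) (conv_inD h2 hy hw))).
  by rewrite nu_conv mulrA.
rewrite Pk_lin // mul0r !addr0; apply: ler_wpM2l; first exact: mulr_ge0.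
exact: Pk_nu.
Qed.

Lemma H0 f y : inD y -> Hth f 0 y = f y.
Proof.
move=> hy; rewrite /Hth /Fth.
rewrite (P_ext (g2 := fun _ => f y)) //; last first.
  by move=> w _; rewrite subr0 !mul1r !mul0r !addr0 -surjective_pairing.
exact: (Pk_const 1%N).
Qed.

Lemma H1 f y : inD y -> Hth f 1 y = P f y.
Proof.
move=> hy; rewrite /Hth /Fth; apply: P_ext => // w _.
by rewrite subrr !mul0r !mul1r !add0r -surjective_pairing.
Qed.

Lemma le_sq (u w : R) : 0 <= w -> u ^+ 2 <= w ^+ 2 -> u <= w.
Proof. move=> w0 h; rewrite leNgt; apply/negP => hlt; nra. Qed.

Lemma sqrt_ts (ts sT : R) : 0 <= ts -> ts <= sT ^+ 2 -> 0 <= sT ->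
  ts <= sT * Num.sqrt ts.
Proof.
move=> t0 tT s0.
have h1 : Num.sqrt ts <= sT.
  have -> : sT = Num.sqrt (sT ^+ 2) by rewrite sqrtr_sqr ger0_norm.
  exact: ler_wsqrtr.
have h2 : ts = Num.sqrt ts * Num.sqrt ts by rewrite -expr2 sqr_sqrtr.
rewrite {1}h2; apply: ler_wpM2r => //; exact: sqrtr_ge0.
Qed.

Lemma numA (r q ts kap sT : R) : 1 <= r -> 0 <= q <= 2 -> q <= r * ts -> 0 <= kap ->
  0 <= ts -> ts <= sT ^+ 2 -> 0 <= sT ->
  q * (Num.sqrt (2 * 1%:R / r) + 2 * (kap / r) * 1%:R) <=
    2 * Num.sqrt ts + 2 * kap * sT * Num.sqrt ts.
Proof.
move=> r1 /andP[q0 q2] qr k0' t0 tT s0.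
have r0 : 0 < r by lra.
rewrite mulr1n !mulr1 mulrDr; apply: lerD.
- apply: le_sq; first by apply: mulr_ge0 => //; exact: sqrtr_ge0.
  rewrite exprMn sqr_sqrtr; last by apply: divr_ge0; lra.
  rewrite exprMn sqr_sqrtr // mulrA ler_pdivrMr //.
  have h1 : q ^+ 2 <= 2 * q by rewrite expr2; nra.
  have h2 : 2 * q <= 2 * (r * ts) by lra.
  have -> : 2 ^+ 2 * ts * r = 2 * (2 * (r * ts)) by rewrite expr2; ring.
  lra.
- have h1 : q * (2 * (kap / r)) <= 2 * kap * ts.
    rewrite (_ : q * (2 * (kap / r)) = 2 * kap * (q / r)); last by field; rewrite gt_eqF.
    apply: ler_wpM2l; first nra.
    by rewrite ler_pdivrMr // mulrC.
  apply: (le_trans h1); rewrite -[2 * kap * sT * _]mulrA.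
  apply: ler_wpM2l; [nra | exact: sqrt_ts].
Qed.

Lemma numB (r m ts kap sT : R) : 1 <= r -> 0 <= m -> m <= r * ts -> 0 <= kap ->
  0 <= ts -> ts <= sT ^+ 2 -> 0 <= sT ->
  Num.sqrt (2 * m / r) + 2 * (kap / r) * m <=
    2 * Num.sqrt ts + 2 * kap * sT * Num.sqrt ts.
Proof.
move=> r1 m0 mr k0' t0 tT s0.
have r0 : 0 < r by lra.
apply: lerD.
- apply: le_sq; first by apply: mulr_ge0 => //; exact: sqrtr_ge0.
  rewrite sqr_sqrtr; last by apply: divr_ge0; lra.
  rewrite exprMn sqr_sqrtr // ler_pdivrMr //.
  have -> : 2 ^+ 2 * ts * r = 4 * (r * ts) by rewrite expr2; ring.
  lra.
- have h1 : 2 * (kap / r) * m <= 2 * kap * ts.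
    rewrite (_ : 2 * (kap / r) * m = 2 * kap * (m / r)); last by field; rewrite gt_eqF.
    apply: ler_wpM2l; first nra.
    by rewrite ler_pdivrMr // mulrC.
  apply: (le_trans h1); rewrite -[2 * kap * sT * _]mulrA.
  apply: ler_wpM2l; [nra | exact: sqrt_ts].
Qed.

Lemma time_reg f K T x s t : 0 <= K -> lipnu f K -> inD x -> 0 <= s -> s <= t -> t <= T ->
  `|uN kappa d N1 N2 f t x - uN kappa d N1 N2 f s x| <=
     K * (4 + 4 * kappa * Num.sqrt T) * Num.sqrt (t - s).
Proof.
move=> K0 Hf hx s0 st tT.
have n1 := N1pos.
have r1 : 1 <= N1%:R :> R by rewrite ler1n.
rewrite !uN_eq.
set r := N1%:R in n1 r1 *.
have sr0 : 0 <= s * r by apply: mulr_ge0 => //; exact: ltW.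
have tr0 : 0 <= t * r by apply: mulr_ge0; [lra | exact: ltW].
have hs := truncn_itv sr0; have ht := truncn_itv tr0.
have nle : (Num.truncn (s * r) <= Num.truncn (t * r))%N.
  by apply: le_truncn; apply: ler_wpM2r => //; exact: ltW.
set ns := Num.truncn (s * r) in hs nle *.
set nt := Num.truncn (t * r) in ht nle *.
set ths := s * r - ns%:R; set tht := t * r - nt%:R.
have hths : 0 <= ths <= 1 by rewrite /ths; move: hs; rewrite -natr1 => /andP[h1 h2]; apply/andP; split; lra.
have hths' : ths < 1 by rewrite /ths; move: hs; rewrite -natr1 => /andP[h1 h2]; lra.
have htht : 0 <= tht <= 1 by rewrite /tht; move: ht; rewrite -natr1 => /andP[h1 h2]; apply/andP; split; lra.
have htht' : tht < 1 by rewrite /tht; move: ht; rewrite -natr1 => /andP[h1 h2]; lra.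
have E : nt = (ns + (nt - ns))%N by rewrite subnKC.
have Ets : r * (t - s) = (nt - ns)%N%:R + tht - ths.
  by rewrite /tht /ths natrB //; ring.
rewrite {1}E iterD -Pk_sub //.
apply: Pk_bound => // w hw.
have sT0 : 0 <= Num.sqrt T := sqrtr_ge0 T.
have tsT : t - s <= Num.sqrt T ^+ 2 by rewrite sqr_sqrtr; lra.
have ts0 : 0 <= t - s by lra.
have K4 : K * (4 + 4 * kappa * Num.sqrt T) * Num.sqrt (t - s) =
   K * ((2 * Num.sqrt (t - s) + 2 * kappa * Num.sqrt T * Num.sqrt (t - s)) +
        (2 * Num.sqrt (t - s) + 2 * kappa * Num.sqrt T * Num.sqrt (t - s))) by ring.
rewrite K4.
case Em: (nt - ns)%N Ets => [|m'] Ets.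
- rewrite /= (le_trans (H_diff K0 htht hths Hf hw)) //.
  rewrite -mulrA ler_wpM2l //.
  have q0 : 0 <= `|tht - ths| := normr_ge0 _.
  have e : tht - ths = r * (t - s) by rewrite Ets mulr0n add0r.
  rewrite e ger0_norm; last by apply: mulr_ge0 => //; exact: ltW.
  have k0' := k0.
  have sq0 : 0 <= 2 * Num.sqrt (t - s) + 2 * kappa * Num.sqrt T * Num.sqrt (t - s).
    have := sqrtr_ge0 (t - s).
    by move=> h; apply: addr_ge0; apply: mulr_ge0 => //; apply: mulr_ge0 => //; nra.
  rewrite -[X in X <= _]addr0; apply: lerD => //.
  rewrite /D1; apply: numA => //; last exact: ltW.
  apply/andP; split; first by apply: mulr_ge0 => //; exact: ltW.
  rewrite -e; lra.
- have k0' := k0.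
  have Pf_lip : lipnu (P f) K := P_lip K0 Hf.
  have h00 : 0 <= (0 : R) <= 1 by rewrite lexx ler01.
  have h11 : 0 <= (1 : R) <= 1 by rewrite lexx ler01.
  have T1 : `|Pk m'.+1 (Hth f tht) w - Pk m'.+1 f w| <= K * tht * D1.
    rewrite -Pk_sub //; apply: Pk_bound => // v hv.
    have t0 : 0 <= tht by case/andP: htht.
    by have := H_diff K0 htht h00 Hf hv; rewrite H0 // subr0 (ger0_norm t0).
  have T2 := Pk_near m' K0 Pf_lip hw.
  have T3 : `|P f w - Hth f ths w| <= K * (1 - ths) * D1.
    have t0 : 0 <= 1 - ths by lra.
    by have := H_diff K0 h11 hths Hf hw; rewrite H1 // (ger0_norm t0).
  have I : Pk m'.+1 f w = Pk m' (P f) w by rewrite iterSr.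
  have E2 : Pk m'.+1 (Hth f tht) w - Hth f ths w =
     (Pk m'.+1 (Hth f tht) w - Pk m'.+1 f w) + (Pk m' (P f) w - P f w) +
     (P f w - Hth f ths w) by rewrite I; ring.
  rewrite E2.
  apply: (le_trans (ler_normD _ _)).
  apply: (le_trans (lerD (ler_normD _ _) (lexx _))).
  set X := 2 * Num.sqrt (t - s) + 2 * kappa * Num.sqrt T * Num.sqrt (t - s).
  have B1 : (tht + (1 - ths)) * D1 <= X.
    rewrite /D1; apply: numA => //; last exact: ltW.
      by apply/andP; split; lra.
    rewrite Ets -natr1; have := ler0n R m'; lra.
  have B2 : Num.sqrt (2 * m'%:R / N1%:R) + 2 * a * m'%:R <= X.
    apply: numB => //; last exact: ltW.
    rewrite Ets -natr1; lra.
  have C1 := ler_wpM2l K0 B1; have C2 := ler_wpM2l K0 B2.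
  apply: (le_trans (lerD (lerD T1 T2) T3)).
  rewrite (_ : K * tht * D1 + _ + K * (1 - ths) * D1 = K * ((tht + (1 - ths)) * D1) +
     K * (Num.sqrt (2 * m'%:R / N1%:R) + 2 * a * m'%:R)); last by ring.
  rewrite [K * (X + X)]mulrDr; exact: lerD C1 C2.
Qed.

Lemma space_reg f K t x y : 0 <= K -> lipnu f K -> 0 <= t -> inD x -> inD y ->
  `|uN kappa d N1 N2 f t x - uN kappa d N1 N2 f t y| <= K * nu x y.
Proof.
move=> K0 Hf t0 hx hy; rewrite !uN_eq.
have tr0 : 0 <= t * N1%:R by apply: mulr_ge0 => //; exact: ler0n.
have := truncn_itv tr0; rewrite -natr1 => /andP[h1 h2].
apply: Pk_lip => //; apply: H_lip => //.
apply/andP; split; lra.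
Qed.

Lemma dist2_le (x y : pt) : dist2 x y <= `|x.1 - y.1| + `|x.2 - y.2|.
Proof.
rewrite /dist2.
have h0 : 0 <= `|x.1 - y.1| + `|x.2 - y.2| by apply: addr_ge0.
have -> : `|x.1 - y.1| + `|x.2 - y.2| = Num.sqrt ((`|x.1 - y.1| + `|x.2 - y.2|) ^+ 2).
  by rewrite sqrtr_sqr (ger0_norm h0).
apply: ler_wsqrtr.
rewrite -(real_normK (num_real (x.1 - y.1))) -(real_normK (num_real (x.2 - y.2))).
have := normr_ge0 (x.1 - y.1); have := normr_ge0 (x.2 - y.2).
set u := `|_|; set v := `|_|; nra.
Qed.

Lemma f_lipnu f L : 0 <= L -> lipschitz_on_D f L -> lipnu f (L / d).
Proof.
move=> L0 Hf x y hx hy.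
apply: (le_trans (Hf x y hx hy)).
have d0' := d0; have d1' := d1.
apply: (le_trans (ler_wpM2l L0 (dist2_le x y))).
rewrite -mulrA; apply: ler_wpM2l => //.
rewrite /nu ler_pdivlMl //.
have := normr_ge0 (x.1 - y.1); have := normr_ge0 (x.2 - y.2).
set u := `|_|; set v := `|_|.
move=> v0 u0.
have du := ler_wpM2r u0 d1; rewrite mul1r in du.
lra.
Qed.

Lemma nu_dist2 (x y : pt) : nu x y <= Num.sqrt 2 * dist2 x y.
Proof.
rewrite /nu /dist2 -sqrtrM //.
have := normr_ge0 (x.1 - y.1); have := normr_ge0 (x.2 - y.2).
set u := `|_|; set v := `|_|; move=> v0 u0.
have h0 : 0 <= u + d * v by apply: addr_ge0 => //; apply: mulr_ge0 => //; exact: ltW.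
have dv := ler_wpM2r v0 d1; rewrite mul1r in dv.
apply: (le_trans (_ : _ <= u + v)); first lra.
have -> : u + v = Num.sqrt ((u + v) ^+ 2) by rewrite sqrtr_sqr ger0_norm //; lra.
apply: ler_wsqrtr.
rewrite -(real_normK (num_real (x.1 - y.1))) -(real_normK (num_real (x.2 - y.2))).
rewrite -/u -/v; have := sqr_ge0 (u - v); nra.
Qed.

End S2.



Theorem lemma3 (R : realType) (kappa d T L : R) :
  0 < kappa -> 0 < d -> d <= 1 -> 0 < T -> 0 <= L ->
  exists C : R,
    forall (N1 N2 : nat) (f : R * R -> R),
      (0 < N1)%N ->
      N2%:R = d * N1%:R ->
      kappa / N1%:R <= 1 ->
      lipschitz_on_D f L ->
      f (0, 0) = 0 -> f (1, 1) = 0 ->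
      forall (x y : R * R) (s t : R),
        inD x -> inD y -> 0 <= s <= T -> 0 <= t <= T ->
        `|uN kappa d N1 N2 f t x - uN kappa d N1 N2 f t y| <= C * dist2 x y /\
        `|uN kappa d N1 N2 f t x - uN kappa d N1 N2 f s x| <= C * Num.sqrt `|t - s|.
Proof.
move=> k0 d0 d1 T0 L0.
exists ((L / d) * (4 + 4 * kappa * Num.sqrt T)).
move=> N1 N2 f N10 N2d a1 Hf _ _ x y s t hx hy /andP[s0 sT] /andP[t0 tT].
have K0 : 0 <= L / d by apply: divr_ge0 => //; exact: ltW.
have Hf' := f_lipnu d0 d1 L0 Hf.
have sT0 := sqrtr_ge0 T.
have c0 : 0 <= 4 * kappa * Num.sqrt T.
  by apply: mulr_ge0 => //; apply: mulr_ge0 => //; exact: ltW.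
split.
- apply: (le_trans (space_reg k0 d0 d1 N10 N2d a1 K0 Hf' t0 hx hy)).
  apply: (le_trans (ler_wpM2l K0 (nu_dist2 d0 d1 x y))).
  rewrite mulrA; apply: ler_wpM2r; first by rewrite /dist2 sqrtr_ge0.
  apply: ler_wpM2l => //.
  have s2 : Num.sqrt 2 <= 2 :> R.
    apply: le_sq; first lra.
    rewrite sqr_sqrtr; last lra.
    rewrite expr2; lra.
  lra.
- have [st|ts] := leP s t.
  + have e : 0 <= t - s by lra.
    rewrite (ger0_norm e).
    by have := time_reg k0 d0 d1 N10 N2d a1 K0 Hf' hx s0 st tT.
  + have e : 0 <= s - t by lra.
    rewrite distrC (distrC t s) (ger0_norm e).
    by have := time_reg k0 d0 d1 N10 N2d a1 K0 Hf' hx t0 (ltW ts) sT.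
Qed.
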